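(* Let $\varphi=(\mathfrak{m}_1,\dots,\mathfrak{m}_\ell)$ be normalizer-adapted. For every $1\le p\le\ell_0$ and $1\le i\le\ell$ we have $d_i=d_{\phi_p(i)}$ and $b_i=b_{\phi_p(i)}$.
   Context: $M=\mathsf{G}/\mathsf{H}$ almost-effective, $\mathsf{G},\mathsf{H}$ compact connected; $Q$ an $\mathrm{Ad}(\mathsf{G})$-invariant inner product on $\mathfrak{g}$, $\mathfrak{m}=\mathfrak{h}^{\perp_Q}$, $\mathfrak{m}_0=\{X\in\mathfrak{m}:[\mathfrak{h},X]=0\}$. $\varphi$ is an ordered $Q$-orthogonal decomposition of $\mathfrak{m}$ into irreducible $\mathrm{Ad}(\mathsf{H})$-modules with $\mathfrak{m}_0=\mathfrak{m}_1+\dots+\mathfrak{m}_{\ell_0}$, $\dim\mathfrak{m}_p=1$ for $p\le\ell_0$, $V_p\in\mathfrak{m}_p$ $Q$-unit. $d_i=\dim\mathfrak{m}_i$; $b_i\ge0$ is defined by $-\mathcal{B}_{\mathfrak{g}}|_{\mathfrak{m}_i\otimes\mathfrak{m}_i}=b_iQ|_{\mathfrak{m}_i\otimes\mathfrak{m}_i}$, $\mathcal{B}_{\mathfrak{g}}$ the Killing form. $[ijk]=\sum Q([e_\alpha,e_\beta],e_\gamma)^2$ over a $Q$-orthonormal adapted basis, $e_\alpha\in\mathfrak{m}_i$, $e_\beta\in\mathfrak{m}_j$, $e_\gamma\in\mathfrak{m}_k$. Normalizer-adapted: if $p\le\ell_0$ and $[\mathfrak{m}_p,\mathfrak{m}_i]\neq0$,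 then $[\mathfrak{m}_p,\mathfrak{m}_i]\cap\mathfrak{m}_j\neq0$ for some $j$. For such $\varphi$, let $I^0_p=\{i:\mathrm{ad}(V_p)|_{\mathfrak{m}_i}=0\}$, $I^+_p$ its complement; for $i\in I^+_p$ there is exactly one $j$ with $[pij]>0$, and $\phi_p(i)$ is defined as this $j$; $\phi_p(i)=i$ for $i\in I^0_p$. *)

(* Defs.v *)
(* The Lie algebra g of G is modelled as R^n ('rV[R]_n) with
   a Q-orthonormal coordinate system, so Q is the standard dot product. *)
From HB Require Import structures.
From mathcomp Require Import all_boot all_order all_algebra.
From mathcomp Require Export reals.
Set Implicit Arguments. Unset Strict Implicit. Unset Printing Implicit Defensive.
Import Order.TTheory GRing.Theory Num.Theory.
Local Open Scope ring_scope.

Section LieDefs.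
Variables (R : realType) (n : nat).
Notation vec := 'rV[R]_n.
Notation bracket := (vec -> vec -> vec).

Definition Qf (x y : vec) : R := (x *m y^T) 0 0.

Definition lie_bracket (br : bracket) : Prop :=
  [/\ forall (a : R) x y z, br (a *: x + y) z = a *: br x z + br y z,
      forall x y, br x y = - br y x &
      forall x y z, br x (br y z) + br y (br z x) + br z (br x y) = 0].

(* ad-invariance of Q (equivalent to Ad(G)-invariance, G connected). *)
Definition Q_invariant (br : bracket) : Prop :=
  forall x y z, Qf (br x y) z = - Qf y (br x z).

(* matrix of ad x in row-vector convention: v *m ad_mx br x = br x v *)
Definition ad_mx (br : bracket) (x : vec) : 'M[R]_n :=
  \matrix_(i, j) (br x (delta_mx 0 i)) 0 j.

Definition killing (br : bracket) (x y : vec) : R :=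
  \tr (ad_mx br x *m ad_mx br y).

(* subspaces of g are row spaces of n x n matrices *)
Definition subalgebra (br : bracket) (h : 'M[R]_n) : Prop :=
  forall x y, (x <= h)%MS -> (y <= h)%MS -> (br x y <= h)%MS.

Definition almost_effective (br : bracket) (h : 'M[R]_n) : Prop :=
  forall I : 'M[R]_n, (I <= h)%MS ->
    (forall x y, (y <= I)%MS -> (br x y <= I)%MS) -> I == 0.

(* U is an ad(h)-submodule (= Ad(H)-submodule, H connected) *)
Definition h_invariant (br : bracket) (h U : 'M[R]_n) : Prop :=
  forall x y, (x <= h)%MS -> (y <= U)%MS -> (br x y <= U)%MS.

Definition irreducible_hmod (br : bracket) (h U : 'M[R]_n) : Prop :=
  [/\ U != 0, h_invariant br h U &
      forall W : 'M[R]_n, (W <= U)%MS -> h_invariant br h W ->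
        W == 0 \/ (W == U)%MS].

Definition mperp (h : 'M[R]_n) : 'M[R]_n := kermx h^T.

Definition in_m0 (br : bracket) (h : 'M[R]_n) (x : vec) : Prop :=
  (x <= mperp h)%MS /\ forall y, (y <= h)%MS -> br y x = 0.

Definition bracket_space (br : bracket) (A B : 'M[R]_n) : 'M[R]_n :=
  (\sum_(r < n) \sum_(s < n) <<br (row r A) (row s B)>>)%MS.

(* [ijk] computed in an adapted Q-orthonormal basis e of m, where e a lies in m_(idx a) *)
Definition brkt3 (br : bracket) (ell N : nat) (e : 'I_N -> vec) (idx : 'I_N -> 'I_ell)
    (i j k : 'I_ell) : R :=
  \sum_(a | idx a == i) \sum_(b | idx b == j) \sum_(c | idx c == k)
     (Qf (br (e a) (e b)) (e c)) ^+ 2.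

(* normalizer-adapted (indices p are 0-based: p < ell0 stands for 1 <= p <= ell0) *)
Definition normalizer_adapted (br : bracket) (ell ell0 : nat) (m : 'I_ell -> 'M[R]_n) : Prop :=
  forall p i : 'I_ell, (p < ell0)%N ->
    bracket_space br (m p) (m i) != 0 ->
    exists j : 'I_ell, (bracket_space br (m p) (m i) :&: m j)%MS != 0.

(* phi_p(i): i if ad(V_p)|m_i = 0, otherwise the (unique) j with [pij] > 0 *)
Definition phi (br : bracket) (ell N : nat) (e : 'I_N -> vec) (idx : 'I_N -> 'I_ell)
    (m : 'I_ell -> 'M[R]_n) (V : 'I_ell -> vec) (p i : 'I_ell) : 'I_ell :=
  if (m i *m ad_mx br (V p) == 0) then i
  else odflt i [pick j | 0 < brkt3 br e idx p i j].

End LieDefs.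

(* Main.v *)
Require Import Defs.
From HB Require Import structures.
From mathcomp Require Import all_boot all_order all_algebra.
From mathcomp Require Import reals.
Import Order.TTheory GRing.Theory Num.Theory.
Set Implicit Arguments. Unset Strict Implicit. Unset Printing Implicit Defensive.
Local Open Scope ring_scope.

Section Aux.
Variables (R : realType) (n : nat) (br : 'rV[R]_n -> 'rV[R]_n -> 'rV[R]_n).
Hypothesis Hl : lie_bracket br.

Lemma br0l z : br 0 z = 0.
Proof.
case: Hl => L _ _; have := L 1 0 0 z; rewrite !scale1r addr0 => H.
by apply: (addIr (br 0 z)); rewrite add0r -H.
Qed.
Lemma brDl x y z : br (x + y) z = br x z + br y z.
Proof. by case: Hl => L _ _; have := L 1 x y z; rewrite !scale1r. Qed.
Lemma brZl a x z : br (a *: x) z = a *: br x z.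
Proof. by case: Hl => L _ _; have := L a x 0 z; rewrite addr0 br0l addr0. Qed.
Lemma brA x y : br x y = - br y x.
Proof. by case: Hl. Qed.
Lemma brDr x y z : br z (x + y) = br z x + br z y.
Proof. by rewrite brA brDl opprD -!brA. Qed.
Lemma brZr a x z : br z (a *: x) = a *: br z x.
Proof. by rewrite brA brZl -scalerN -brA. Qed.
Lemma br0r z : br z 0 = 0.
Proof. by rewrite brA br0l oppr0. Qed.
Lemma brNr x z : br z (- x) = - br z x.
Proof. by rewrite -scaleN1r brZr scaleN1r. Qed.
Lemma brNl x z : br (- x) z = - br x z.
Proof. by rewrite -scaleN1r brZl scaleN1r. Qed.

Lemma br_sumr (I : finType) (c : I -> R) (v : I -> 'rV_n) z :
  br z (\sum_i c i *: v i) = \sum_i c i *: br z (v i).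
Proof.
apply: (big_ind2 (fun a b => br z a = b)) => //; first exact: br0r.
  by move=> ? ? ? ? <- <-; rewrite brDr.
by move=> i _; rewrite brZr.
Qed.

Lemma adE x v : v *m ad_mx br x = br x v.
Proof.
apply/rowP => j; rewrite !mxE {2}(row_sum_delta v) br_sumr summxE.
by apply: eq_bigr => i _; rewrite !mxE.
Qed.

Lemma jac x y v : br (br x y) v = br x (br y v) - br y (br x v).
Proof.
case: Hl => _ _ J; have := J x y v.
rewrite [br v x]brA brNr [br v (br x y)]brA.
by move/eqP; rewrite addr_eq0 opprK => /eqP <-.
Qed.


Lemma ad_br x y : ad_mx br (br x y) = ad_mx br y *m ad_mx br x - ad_mx br x *m ad_mx br y.
Proof.
apply/row_matrixP => i; rewrite !rowE mulmxBr !mulmxA !adE.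
by rewrite jac.
Qed.

Lemma killing_inv x y z : killing br (br x y) z = - killing br y (br x z).
Proof.
rewrite /killing !ad_br mulmxBl mulmxBr !linearB /= opprB.
rewrite -!mulmxA [\tr (ad_mx br x *m _)]mxtrace_mulC -!mulmxA.
by rewrite addrC.
Qed.

End Aux.
Section Geo.
Variables (R : realType) (n : nat).

Lemma nz_row k (A : 'M[R]_(k, n)) : A != 0 -> exists i, row i A != 0.
Proof.
move=> nz; case: (pickP (fun i => row i A != 0)) => [i Hi | H]; first by exists i.
case/negP: nz; apply/eqP/row_matrixP => i; rewrite row0; apply/eqP.
by move: (H i) => /= /negbFE.
Qed.

Lemma QfZl c (x y : 'rV[R]_n) : Qf (c *: x) y = c * Qf x y.
Proof. by rewrite /Qf -scalemxAl mxE. Qed.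

Lemma Qf_orth (A B : 'M[R]_n) x y : A *m B^T = 0 -> (x <= A)%MS -> (y <= B)%MS -> Qf x y = 0.
Proof.
move=> AB /submxP [D ->] /submxP [E ->].
by rewrite /Qf trmx_mul !mulmxA -(mulmxA D) AB mulmx0 mul0mx mxE.
Qed.

Lemma Qf_nz (v : 'rV[R]_n) : Qf v v = 1 -> v != 0.
Proof. by move=> H; apply/eqP => v0; move: H; rewrite v0 /Qf mul0mx mxE => /eqP; rewrite eq_sym oner_eq0. Qed.

Lemma rank1_sc (A : 'M[R]_n) (v x : 'rV[R]_n) : \rank A = 1%N -> (v <= A)%MS -> v != 0 ->
  (x <= A)%MS -> exists c, x = c *: v.
Proof.
move=> rA vA nzv xA.
have : (v == A)%MS.
  by rewrite -(mxrank_leqif_eq vA).2 rank_rV nzv rA.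
move/eqmxP => eqvA; move: xA; rewrite -eqvA => /submxP [D ->].
by exists (D 0 0); rewrite {1}(mx11_scalar D) mul_scalar_mx.
Qed.
End Geo.
Section Main.
Variables (R : realType) (n : nat) (br : 'rV[R]_n -> 'rV[R]_n -> 'rV[R]_n) (h : 'M[R]_n)
  (ell ell0 : nat) (m : 'I_ell -> 'M[R]_n) (V : 'rV[R]_n) (p : 'I_ell).
Hypothesis Hl : lie_bracket br.
Hypothesis Hirr : forall i, irreducible_hmod br h (m i).
Hypothesis Hna : normalizer_adapted br ell0 m.
Hypothesis Hp : (p < ell0)%N.
Hypothesis rp : \rank (m p) = 1%N.
Hypothesis Vp : (V <= m p)%MS.
Hypothesis Vnz : V != 0.
Hypothesis Vc : forall y, (y <= h)%MS -> br y V = 0.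

Let M := ad_mx br V.

Lemma comm_hV x z : (x <= h)%MS -> br x (br V z) = br V (br x z).
Proof.
move=> xh; have := jac Hl x V z; rewrite Vc // br0l // => /eqP.
by rewrite eq_sym subr_eq0 => /eqP.
Qed.

Lemma img_inv k : h_invariant br h (m k *m M).
Proof.
move=> x y xh /submxP [D ->]; rewrite mulmxA adE // comm_hV // -adE //.
apply: submxMr; case: (Hirr k) => _ Hk _; apply: Hk => //.
exact: submxMl.
Qed.

Lemma claimA k : m k *m M != 0 -> exists j, (m k *m M == m j)%MS.
Proof.
move=> nzI.
have bsI : (bracket_space br (m p) (m k) <= m k *m M)%MS.
  apply/sumsmx_subP => r _; apply/sumsmx_subP => s _; rewrite genmxE.
  have [c ->] := rank1_sc rp Vp Vnz (row_sub r (m p)).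
  rewrite brZl // -adE //; apply: scalemx_sub; apply: submxMr; exact: row_sub.
have mpnz : m p != 0 by rewrite -mxrank_eq0 rp.
have [r nzr] := nz_row mpnz.
have [s nzs] := nz_row nzI.
have [c ec] := rank1_sc rp Vp Vnz (row_sub r (m p)).
have bsnz : bracket_space br (m p) (m k) != 0.
  apply/eqP => bs0.
  have : (br (row r (m p)) (row s (m k)) <= bracket_space br (m p) (m k))%MS.
    apply: (sumsmx_sup r) => //; apply: (sumsmx_sup s) => //; by rewrite genmxE.
  rewrite bs0 submx0 ec brZl // -adE // -row_mul scaler_eq0 (negbTE nzs) orbF => /eqP c0.
  by move: nzr; rewrite ec c0 scale0r eqxx.
have [j nzj] := Hna Hp bsnz.
pose W := (m k *m M :&: m j)%MS.
have Wnz : W != 0.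
  apply: contraNneq nzj => W0; rewrite -submx0 -W0; apply: capmxS => //.
have Winv : h_invariant br h W.
  move=> x y xh; rewrite !sub_capmx => /andP [y1 y2]; apply/andP; split.
    exact: img_inv.
  by case: (Hirr j) => _ Hj _; apply: Hj.
pose P := (m k :&: kermx (M *m cokermx W))%MS.
have Pinv : h_invariant br h P.
  move=> x y xh; rewrite !sub_capmx => /andP [y1 /sub_kermxP y2]; apply/andP; split.
    by case: (Hirr k) => _ Hk _; apply: Hk.
  apply/sub_kermxP; rewrite mulmxA adE // -comm_hV // -(adE Hl V y).
  apply/eqP; rewrite -submxE; apply: Winv => //.
  by rewrite submxE -mulmxA y2.
have ImW : (m k *m M <= m j)%MS.
  case: (Hirr k) => _ _ /(_ P (capmxSl _ _) Pinv) [/eqP P0 | /andP [_ kP]].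
    case/negP: Wnz; have : (W <= m k *m M)%MS by exact: capmxSl.
    case/submxP => D eW.
    have : (D *m m k <= P)%MS.
      rewrite sub_capmx submxMl; apply/sub_kermxP.
      by rewrite mulmxA -(mulmxA D) -eW; apply/eqP; rewrite -submxE.
    by rewrite P0 submx0 => /eqP Z0; rewrite eW mulmxA Z0 mul0mx.
  apply: (submx_trans _ (capmxSr (m k *m M) (m j))).
  rewrite submxE; apply/eqP; rewrite -mulmxA; apply/sub_kermxP.
  exact: (submx_trans kP (capmxSr _ _)).
case: (Hirr j) => _ _ /(_ _ ImW (@img_inv k)) [/eqP I0 | eqj].
  by case/eqP: nzI.
by exists j.
Qed.
End Main.

Lemma sum_nz (R : realType) (I : finType) (P : pred I) (F : I -> R) :
  \sum_(a | P a) F a != 0 -> exists a, P a && (F a != 0).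
Proof.
move=> H; case: (pickP (fun a => P a && (F a != 0))) => [a Ha | Hn]; first by exists a.
case/eqP: H; apply: big1 => a Pa; apply/eqP; move: (Hn a); rewrite Pa /=.
by move/negbFE.
Qed.

Lemma Qf0r (R : realType) (n : nat) (x : 'rV[R]_n) : Qf x 0 = 0.
Proof. by rewrite /Qf trmx0 mulmx0 mxE. Qed.

Theorem lemma5p3 (R : realType) (n : nat)
  (br : 'rV[R]_n -> 'rV[R]_n -> 'rV[R]_n) (h : 'M[R]_n)
  (ell ell0 : nat) (m : 'I_ell -> 'M[R]_n) (V : 'I_ell -> 'rV[R]_n)
  (b : 'I_ell -> R) (N : nat) (e : 'I_N -> 'rV[R]_n) (idx : 'I_N -> 'I_ell) :
  (* g compact Lie algebra with ad-invariant inner product Q, h = Lie(H) *)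
  lie_bracket br -> Q_invariant br -> subalgebra br h -> almost_effective br h ->
  (* ordered Q-orthogonal decomposition of m into irreducible modules *)
  (ell0 <= ell)%N ->
  (forall i, irreducible_hmod br h (m i)) ->
  (forall i j : 'I_ell, i != j -> m i *m (m j)^T = 0) ->
  (\sum_(i < ell) m i == mperp h)%MS ->
  (* m_0 = m_1 + ... + m_ell0, each of dimension 1 *)
  (forall p : 'I_ell, (p < ell0)%N -> \rank (m p) = 1%N) ->
  (forall x, in_m0 br h x <-> (x <= \sum_(p : 'I_ell | (p < ell0)%N) m p)%MS) ->
  (* V_p a Q-unit vector in m_p *)
  (forall p : 'I_ell, (p < ell0)%N -> (V p <= m p)%MS /\ Qf (V p) (V p) = 1) ->
  (* b_i : -B|m_i = b_i Q|m_i *)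
  (forall i, 0 <= b i /\ forall x y, (x <= m i)%MS -> (y <= m i)%MS ->
                   - killing br x y = b i * Qf x y) ->
  (* e : Q-orthonormal basis of m adapted to the decomposition *)
  (forall a c, Qf (e a) (e c) = (a == c)%:R) ->
  (forall a, (e a <= m (idx a))%MS) ->
  (forall i, #|[set a | idx a == i]| = \rank (m i)) ->
  normalizer_adapted br ell0 m ->
  forall p i : 'I_ell, (p < ell0)%N ->
    \rank (m i) = \rank (m (phi br e idx m V p i)) /\ b i = b (phi br e idx m V p i).
Proof.
move=> Hl Hinv _ _ _ Hirr Horth _ Hrank Hm0 HV Hb _ He_in _ Hna p i Hp.
have [Vp VV] := HV p Hp.
have Vnz := Qf_nz VV.
have rp := Hrank p Hp.
have Vc : forall y, (y <= h)%MS -> br y (V p) = 0.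
  move=> y yh; have [_ ] := (Hm0 (V p)).2 (sumsmx_sup p Hp Vp).
  by apply.
rewrite /phi; case: ifP => [_ | nz]; first by split.
case: pickP => [j /= Hj | _]; last by split.
have := lt0r_neq0 Hj; rewrite /brkt3 => /sum_nz [a /andP [/eqP ia]].
move=> /sum_nz [bb /andP [/eqP ib]] /sum_nz [cc /andP [/eqP ic]].
rewrite sqrf_eq0 => Q0.
have ea := He_in a; rewrite ia in ea.
have eb := He_in bb; rewrite ib in eb.
have ec := He_in cc; rewrite ic in ec.
have [c ecV] := rank1_sc rp Vp Vnz ea.
move: Q0; rewrite ecV brZl // QfZl mulf_eq0 negb_or => /andP [_ Q0].
have nzI : m i *m ad_mx br (V p) != 0 by rewrite nz.
have [i' ei'] := claimA Hl Hirr Hna Hp rp Vp Vnz Vc nzI.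
have bbin : (br (V p) (e bb) <= m i')%MS.
  rewrite -(adE Hl) -(eqmxP ei'); exact: submxMr.
have ji : j = i'.
  case: (eqVneq i' j) => // /Horth Ho; case/negP: Q0; apply/eqP.
  exact: (Qf_orth Ho bbin ec).
subst i'.
have Q1 : Qf (e bb) (br (V p) (e cc)) != 0 by rewrite -[Qf _ _]opprK -Hinv oppr_eq0.
have nzJ : m j *m ad_mx br (V p) != 0.
  apply/eqP => J0; case/negP: Q1.
  have : (br (V p) (e cc) <= m j *m ad_mx br (V p))%MS by rewrite -(adE Hl); exact: submxMr.
  by rewrite J0 submx0 => /eqP ->; rewrite Qf0r.
have [j' ej'] := claimA Hl Hirr Hna Hp rp Vp Vnz Vc nzJ.
have ccin : (br (V p) (e cc) <= m j')%MS.
  rewrite -(adE Hl) -(eqmxP ej'); exact: submxMr.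
have ji : j' = i.
  case: (eqVneq i j') => // /Horth Ho; case/negP: Q1; apply/eqP.
  exact: (Qf_orth Ho eb ccin).
subst j'.
split.
  apply/eqP; rewrite eqn_leq; apply/andP; split.
    by rewrite -(eqmx_rank ej'); exact: mxrankM_maxl.
  by rewrite -(eqmx_rank ei'); exact: mxrankM_maxl.
have [_ Hbj] := Hb j; have [_ Hbi] := Hb i.
have E1 := Hbj _ _ bbin ec.
have E2 := Hbi _ _ eb ccin.
rewrite killing_inv // opprK in E1.
move: E2; rewrite E1 -[Qf (e bb) _]opprK -Hinv mulrN => /eqP.
rewrite eqr_opp => /eqP E.
by apply: (mulIf Q0); rewrite E.
Qed.
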